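(* Let $\mathsf{T}$ be an $R$-linear triangulated category, $X$ and $Y$ objects of $\mathsf{T}$, $d$ a positive even integer and $z\in R^d$. Assume $\lambda^n(X,Y)<\infty$ for all $n\in\mathbb{Z}$. If for all $n\gg0$ there are short exact sequences $$0\to\operatorname{Hom}_{\mathsf{T}}(X,\Sigma^nY)\to\operatorname{Hom}_{\mathsf{T}}(X,\Sigma^{n+d}Y)\to\operatorname{Hom}_{\mathsf{T}}(X,\Sigma^n(Y/\!\!/z))\to0$$ (of $R^0$-modules), then $h(X,Y/\!\!/z)(n)=h(X,Y)(n+d)-h(X,Y)(n)$ for all $n\gg0$, and for every $s\ge1$ one has $\Delta^{s-1}h(X,Y/\!\!/z)(n)=\Delta^sh(X,Y)(n)$ for all $n\gg0$.
   Context: $R=\bigoplus_{n\ge 0}R^n$ is a graded-commutative Noetherian ring. $\mathsf{T}$ is a triangulated category with suspension $\Sigma$ that is $R$-linear: a graded ring homomorphism $\phi$ from $R$ to the graded center of $\mathsf{T}$ (degree-$n$ elements are natural transformations $\eta:\mathrm{id}\to\Sigma^n$ with $\eta\Sigma=(-1)^n\Sigma\eta$), giving $\phi_Y:R\to\bigoplus_n\operatorname{Hom}_{\mathsf{T}}(Y,\Sigma^nY)$; each $\operatorname{Hom}_{\mathsf{T}}(X,\Sigma^nY)$ is an $R^0$-module. $\lambda^n(X,Y)=\ell_{R^0}\operatorname{Hom}_{\mathsf{T}}(X,\Sigma^nY)$. $Y/\!\!/z$ is defined by a distinguished triangle $Y\xrightarrow{\phi_Y(z)}\Sigma^dY\to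 Y/\!\!/z\to\Sigma Y$. The (index $d$) generalized Herbrand difference is $h(X,Y)(n)=\sum_{i=0}^{d-1}(-1)^{n+i}\lambda^{n+i}(X,Y)$. The difference operator of index $d$ is $\Delta^1f(n)=f(n+d)-f(n)$, $\Delta^0f=f$, $\Delta^sf=\Delta^1(\Delta^{s-1}f)$. *)

(* Defs.v *)
From Stdlib Require Import ClassicalEpsilon.
From mathcomp Require Import all_boot all_algebra.
Set Implicit Arguments. Unset Strict Implicit. Unset Printing Implicit Defensive.
Import GRing.Theory.
Local Open Scope ring_scope.

Record gcring := GCRing {
  gR :> pzRingType;
  gdeg : nat -> gR -> bool;                  (* a \in R^n *)
  gdeg0 : forall n, gdeg n 0;
  gdegB : forall n a b, gdeg n a -> gdeg n b -> gdeg n (a - b);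
  gdegM : forall m n a b, gdeg m a -> gdeg n b -> gdeg (m + n)%N (a * b);
  gdeg1 : gdeg 0 1;
  gdecomp : forall x : gR, exists s : seq gR,
      (forall i, gdeg i s`_i) /\ x = \sum_(i < size s) s`_i;
  gdirect : forall s : seq gR, (forall i, gdeg i s`_i) ->
      \sum_(i < size s) s`_i = 0 -> forall i, s`_i = 0;
  gcomm : forall m n a b, gdeg m a -> gdeg n b -> a * b = (-1) ^+ (m * n) * (b * a);
  gnoeth : forall I : nat -> gR -> Prop,
      (forall k, I k 0 /\ (forall x y, I k x -> I k y -> I k (x + y))
                 /\ (forall r x, I k x -> I k (r * x) /\ I k (x * r))) ->
      (forall k x, I k x -> I k.+1 x) ->
      exists N, forall k x, (N <= k)%N -> I k x -> I N x
}.

Record addcat := AddCat {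
  Obj : Type;
  Mor : Obj -> Obj -> zmodType;
  comp : forall X Y Z : Obj, Mor Y Z -> Mor X Y -> Mor X Z;
  idm : forall X : Obj, Mor X X;
  compA : forall X Y Z W (f : Mor X Y) (g : Mor Y Z) (h : Mor Z W),
      comp h (comp g f) = comp (comp h g) f;
  comp1m : forall X Y (f : Mor X Y), comp (idm Y) f = f;
  compm1 : forall X Y (f : Mor X Y), comp f (idm X) = f;
  compDl : forall X Y Z (f : Mor X Y) (g1 g2 : Mor Y Z),
      comp (g1 + g2) f = comp g1 f + comp g2 f;
  compDr : forall X Y Z (f1 f2 : Mor X Y) (g : Mor Y Z),
      comp g (f1 + f2) = comp g f1 + comp g f2;
  zobj : Obj;
  zobj_term : forall X (f : Mor X zobj), f = 0;
  zobj_init : forall X (f : Mor zobj X), f = 0;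
  biprod : forall X Y, exists P (i1 : Mor X P) (i2 : Mor Y P) (p1 : Mor P X)
      (p2 : Mor P Y), [/\ comp p1 i1 = idm X, comp p2 i2 = idm Y,
      comp p1 i2 = 0, comp p2 i1 = 0 & comp i1 p1 + comp i2 p2 = idm P]
}.
Arguments comp {_ X Y Z}.
Arguments idm {_}.
Arguments zobj {_}.

Definition isiso (C : addcat) (X Y : Obj C) (f : Mor X Y) :=
  exists g : Mor Y X, comp g f = idm X /\ comp f g = idm Y.

Record suspension (C : addcat) := Suspension {
  Sg : Obj C -> Obj C;
  Sgm : forall X Y : Obj C, Mor X Y -> Mor (Sg X) (Sg Y);
  SgmD : forall X Y (f g : Mor X Y), Sgm (f + g) = Sgm f + Sgm g;
  Sgm1 : forall X, Sgm (idm X) = idm (Sg X);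
  SgmM : forall X Y Z (f : Mor X Y) (g : Mor Y Z), Sgm (comp g f) = comp (Sgm g) (Sgm f);
  Sgm_inj : forall X Y (f g : Mor X Y), Sgm f = Sgm g -> f = g;
  Sgm_surj : forall X Y (g : Mor (Sg X) (Sg Y)), exists f, Sgm f = g;
  Sg_esurj : forall Y, exists W (u : Mor (Sg W) Y), isiso u
}.
Arguments Sg {C}.
Arguments Sgm {C} s {X Y}.

Definition shn (C : addcat) (S : suspension C) (n : nat) (Y : Obj C) : Obj C :=
  iter n (Sg S) Y.

Fixpoint shm (C : addcat) (S : suspension C) (n : nat) (X Y : Obj C)
  (f : Mor X Y) : Mor (shn S n X) (shn S n Y) :=
  match n with 0 => f | n'.+1 => Sgm S (shm S n' f) end.

Definition castH (C : addcat) (X A B : Obj C) (e : A = B) (f : Mor X A) : Mor X B :=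
  eq_rect A (fun B => Mor X B) f B e.

Record triangulated (C : addcat) (S : suspension C) := Triangulated {
  dist : forall X Y Z : Obj C, Mor X Y -> Mor Y Z -> Mor Z (Sg S X) -> Prop;
  TR1_id : forall X, dist (idm X) (0 : Mor X zobj) 0;
  TR1_cone : forall X Y (f : Mor X Y), exists Z (g : Mor Y Z) (h : Mor Z (Sg S X)),
      dist f g h;
  TR1_iso : forall X Y Z X' Y' Z' (f : Mor X Y) (g : Mor Y Z) (h : Mor Z (Sg S X))
      (f' : Mor X' Y') (g' : Mor Y' Z') (h' : Mor Z' (Sg S X'))
      (a : Mor X X') (b : Mor Y Y') (c : Mor Z Z'),
      isiso a -> isiso b -> isiso c ->
      comp f' a = comp b f -> comp g' b = comp c g -> comp h' c = comp (Sgm S a) h ->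
      dist f g h -> dist f' g' h';
  TR2 : forall X Y Z (f : Mor X Y) (g : Mor Y Z) (h : Mor Z (Sg S X)),
      dist f g h <-> dist g h (- Sgm S f);
  TR3 : forall X Y Z X' Y' Z' (f : Mor X Y) (g : Mor Y Z) (h : Mor Z (Sg S X))
      (f' : Mor X' Y') (g' : Mor Y' Z') (h' : Mor Z' (Sg S X'))
      (a : Mor X X') (b : Mor Y Y'),
      dist f g h -> dist f' g' h' -> comp f' a = comp b f ->
      exists c : Mor Z Z', comp g' b = comp c g /\ comp h' c = comp (Sgm S a) h;
  TR4 : forall X Y Z Z' X' Y' (f : Mor X Y) (g : Mor Y Z)
      (u : Mor Y Z') (u' : Mor Z' (Sg S X))
      (v : Mor Z X') (v' : Mor X' (Sg S Y))
      (w : Mor Z Y') (w' : Mor Y' (Sg S X)),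
      dist f u u' -> dist g v v' -> dist (comp g f) w w' ->
      exists (p : Mor Z' Y') (q : Mor Y' X'),
        [/\ dist p q (comp (Sgm S u) v'), comp p u = comp w g, comp w' p = u',
            comp q w = v & comp v' q = comp (Sgm S f) w']
}.
Arguments dist {C S} _ {X Y Z}.

(* R-linear structure: a graded ring map R -> graded centre of T      *)
(* phi n a Y = phi_Y(a) : Y -> Sigma^n Y  for a in R^n                *)
Record rlinear (Rg : gcring) (C : addcat) (S : suspension C) := RLinear {
  phi : forall (n : nat) (a : Rg) (Y : Obj C), Mor Y (shn S n Y);
  phiD : forall n a b Y, gdeg n a -> gdeg n b -> phi n (a + b) Y = phi n a Y + phi n b Y;
  phi1 : forall Y, phi 0 1 Y = idm Y;
  phi_nat : forall n a, gdeg n a -> forall Y Y' (f : Mor Y Y'),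
      comp (phi n a Y') f = comp (shm S n f) (phi n a Y);
  phi_susp : forall n a, gdeg n a -> forall Y,
      phi n a (Sg S Y) = castH (iterSr n (Sg S) Y) (Sgm S (phi n a Y)) *~ ((-1) ^+ n);
  phiM : forall m n a b, gdeg m a -> gdeg n b -> forall Y,
      phi (m + n) (a * b) Y
      = castH (esym (iterD m n (Sg S) Y)) (comp (phi m a (shn S n Y)) (phi n b Y))
}.
Arguments phi {Rg C S} _ n a Y.

Section Length.
Variables (Rg : gcring) (V : zmodType) (act : Rg -> V -> V).

Definition submod (P : V -> Prop) :=
  [/\ P 0, forall u v, P u -> P v -> P (u + v), forall u, P u -> P (- u)
    & forall r u, gdeg 0 r -> P u -> P (act r u)].

Definition has_chain (l : nat) :=
  exists M : nat -> V -> Prop, (forall i, submod (M i)) /\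
    forall i, (i < l)%N -> (forall u, M i u -> M i.+1 u) /\ exists u, M i.+1 u /\ ~ M i u.

Definition length_is (l : nat) := has_chain l /\ ~ has_chain l.+1.
Definition finite_length := exists l, length_is l.
(* the length (meaningful only when finite) *)
Definition mlength : nat := epsilon (inhabits 0%N) length_is.
End Length.

Definition hact (Rg : gcring) (C : addcat) (S : suspension C) (L : rlinear Rg S)
  (X W : Obj C) (r : Rg) (f : Mor X W) : Mor X W := comp (phi L 0 r W) f.

Definition lam (Rg : gcring) (C : addcat) (S : suspension C) (L : rlinear Rg S)
  (X Y : Obj C) (n : nat) : nat := mlength (@hact Rg C S L X (shn S n Y)).

(* lambda^n(X, Y) < oo for every integer n.  For n = -m < 0, Sigma^{-m} Y is
   any object W with Sigma^m W isomorphic to Y (Sigma is an equivalence). *)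
Definition lam_finite_all (Rg : gcring) (C : addcat) (S : suspension C) (L : rlinear Rg S)
  (X Y : Obj C) :=
  (forall n : nat, finite_length (@hact Rg C S L X (shn S n Y))) /\
  (forall (m : nat) (W : Obj C) (u : Mor (shn S m W) Y), isiso u ->
      finite_length (@hact Rg C S L X W)).

Definition ses (Rg : gcring) (A B D : zmodType)
  (actA : Rg -> A -> A) (actB : Rg -> B -> B) (actD : Rg -> D -> D) :=
  exists (al : A -> B) (be : B -> D),
    [/\ (forall x y, al (x + y) = al x + al y),
        (forall x y, be (x + y) = be x + be y),
        (forall r x, gdeg 0 r -> al (actA r x) = actB r (al x))
      & (forall r x, gdeg 0 r -> be (actB r x) = actD r (be x))] /\
    [/\ injective al, (forall y, exists x, be x = y)
      & (forall y, be y = 0 <-> exists x, al x = y)].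

Definition herbrand (Rg : gcring) (C : addcat) (S : suspension C) (L : rlinear Rg S)
  (d : nat) (X Y : Obj C) (n : nat) : int :=
  \sum_(i < d) (-1) ^+ (n + i) * (lam L X Y (n + i))%:Z.

Fixpoint Delta (d s : nat) (f : nat -> int) : nat -> int :=
  match s with
  | 0 => f
  | s'.+1 => fun n => Delta d s' f (n + d) - Delta d s' f n
  end.

(* Main.v *)
Require Import Defs.
From Stdlib Require Import Classical.
From mathcomp Require Import all_boot all_algebra.
From mathcomp Require Import ring.
Set Implicit Arguments. Unset Strict Implicit. Unset Printing Implicit Defensive.
Import GRing.Theory.
Local Open Scope ring_scope.

Section Chains.
Variables (Rg : gcring) (V : zmodType) (act : Rg -> V -> V).

Definition chainP (M : nat -> V -> Prop) (l : nat) :=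
  (forall i, submod act (M i)) /\ forall i, (i < l)%N -> (forall u, M i u -> M i.+1 u) /\ exists u, M i.+1 u /\ ~ M i u.

Lemma chain_down l k : (k <= l)%N -> has_chain act l -> has_chain act k.
Proof.
move=> kl [M [HM Hs]]; exists M; split=> // i ik; apply: Hs; exact: leq_trans ik kl.
Qed.

Lemma chain0 : has_chain act 0.
Proof.
exists (fun _ _ => True); split=> // i; by split.
Qed.

Lemma snoc M c (M' : V -> Prop) : chainP M c -> submod act M' ->
  (forall u, M c u -> M' u) -> (exists u, M' u /\ ~ M c u) ->
  chainP (fun i => if (i <= c)%N then M i else M') c.+1.
Proof.
move=> [HM Hs] HM' inc [u [u1 u2]]; split.
  by move=> i; case: (i <= c)%N.
move=> i; rewrite ltnS => ic.
rewrite ic; case: (ltnP i c) => ic'.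
  by apply: Hs.
have ei : i = c by apply/eqP; rewrite eqn_leq ic ic'.
subst i; rewrite /=; split=> //; by exists u.
Qed.

Lemma length_uniq l l' : length_is act l -> length_is act l' -> l = l'.
Proof.
move=> [h1 h2] [h1' h2'].
case: (ltngtP l l') => // c.
- by case: h2; apply: chain_down h1'.
- by case: h2'; apply: chain_down h1.
Qed.

Lemma mlength_eq l : length_is act l -> mlength act = l.
Proof.
move=> hl; apply: (length_uniq _ hl).
rewrite /mlength; exact: (ClassicalEpsilon.epsilon_spec _ _ (ex_intro _ l hl)).
Qed.

Lemma le_length l k : length_is act l -> has_chain act k -> (k <= l)%N.
Proof.
move=> [_ h] hk; rewrite leqNgt; apply/negP => lk; apply: h; exact: chain_down lk hk.
Qed.

Lemma find_max L : ~ has_chain act L.+1 -> exists l, length_is act l.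
Proof.
elim: L => [|L IH] h.
  by exists 0%N; split=> //; apply: chain0.
case: (classic (has_chain act L.+1)) => hL.
  by exists L.+1.
exact: IH.
Qed.
End Chains.

Section Ses.
Variables (Rg : gcring) (A B D : zmodType)
  (actA : Rg -> A -> A) (actB : Rg -> B -> B) (actD : Rg -> D -> D)
  (al : A -> B) (be : B -> D).
Hypotheses (alD : forall x y, al (x + y) = al x + al y)
  (beD : forall x y, be (x + y) = be x + be y)
  (alA : forall r x, gdeg 0 r -> al (actA r x) = actB r (al x))
  (beA : forall r x, gdeg 0 r -> be (actB r x) = actD r (be x))
  (alI : injective al) (beS : forall y, exists x, be x = y)
  (ex : forall y, be y = 0 <-> exists x, al x = y).

Lemma al0 : al 0 = 0.
Proof. by have := alD 0 0; rewrite addr0 => /eqP; rewrite -subr_eq subrr eq_sym => /eqP. Qed.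
Lemma be0 : be 0 = 0.
Proof. by have := beD 0 0; rewrite addr0 => /eqP; rewrite -subr_eq subrr eq_sym => /eqP. Qed.
Lemma alN x : al (- x) = - al x.
Proof. by apply/eqP; rewrite -subr_eq0 opprK -alD addNr al0. Qed.
Lemma beN x : be (- x) = - be x.
Proof. by apply/eqP; rewrite -subr_eq0 opprK -beD addNr be0. Qed.

Lemma img_al P : submod actA P -> submod actB (fun y => exists x, P x /\ al x = y).
Proof.
move=> [P0 PD PN PA]; split.
- by exists 0; rewrite al0.
- by move=> _ _ [x [Px <-]] [y [Py <-]]; exists (x + y); rewrite alD; split=> //; apply: PD.
- by move=> _ [x [Px <-]]; exists (- x); rewrite alN; split=> //; apply: PN.
- by move=> r _ r0 [x [Px <-]]; exists (actA r x); rewrite alA //; split=> //; apply: PA.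
Qed.

Lemma img_be P : submod actB P -> submod actD (fun y => exists x, P x /\ be x = y).
Proof.
move=> [P0 PD PN PA]; split.
- by exists 0; rewrite be0.
- by move=> _ _ [x [Px <-]] [y [Py <-]]; exists (x + y); rewrite beD; split=> //; apply: PD.
- by move=> _ [x [Px <-]]; exists (- x); rewrite beN; split=> //; apply: PN.
- by move=> r _ r0 [x [Px <-]]; exists (actB r x); rewrite beA //; split=> //; apply: PA.
Qed.

Lemma pre_al P : submod actB P -> submod actA (fun x => P (al x)).
Proof.
move=> [P0 PD PN PA]; split.
- by rewrite al0.
- by move=> x y Px Py; rewrite alD; apply: PD.
- by move=> x Px; rewrite alN; apply: PN.
- by move=> r x r0 Px; rewrite alA //; apply: PA.
Qed.

Lemma pre_be P : submod actD P -> submod actB (fun x => P (be x)).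
Proof.
move=> [P0 PD PN PA]; split.
- by rewrite be0.
- by move=> x y Px Py; rewrite beD; apply: PD.
- by move=> x Px; rewrite beN; apply: PN.
- by move=> r x r0 Px; rewrite beA //; apply: PA.
Qed.

Lemma lower a b : has_chain actA a -> has_chain actD b -> has_chain actB (a + b).
Proof.
move=> [MA [HA SA]] [MD [HD SD]].
exists (fun i => if (i <= a)%N then (fun y => exists x, MA i x /\ al x = y)
                 else (fun y => MD (i - a)%N (be y))); split.
  by move=> i; case: (i <= a)%N; [apply: img_al | apply: pre_be].
move=> i iab.
case: (ltnP i a) => ia.
  rewrite (ltnW ia); have [inc [u [u1 u2]]] := SA i ia; split.
    by move=> _ [x [Px <-]]; exists x; split=> //; apply: inc.
  exists (al u); split; first by exists u.
  by move=> [x [Px /alI e]]; apply: u2; rewrite -e.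
have ib : (i - a < b)%N by rewrite ltn_subLR.
have [inc [u [u1 u2]]] := SD _ ib.
rewrite /=.
case: (leqP i a) => ia'.
  have ei : i = a by apply/eqP; rewrite eqn_leq ia ia'.
  subst i; rewrite subnn in inc u1 u2; rewrite subSnn.
  split.
    move=> _ [x [_ <-]]; apply: inc.
    have -> : be (al x) = 0 by apply/ex; exists x.
    by case: (HD 0%N).
  have [y hy] := beS u; exists y; split; first by rewrite hy.
  move=> [x [_ e]]; apply: u2.
  have : be y = 0 by apply/ex; exists x.
  by rewrite hy => ->; case: (HD 0%N).
rewrite subSn // in inc u1 u2 *.
split; first by move=> y; apply: inc.
have [y hy] := beS u; exists y; by rewrite hy.
Qed.

Lemma upper k M : chainP actB M k -> exists a b MA MD,
  [/\ (k <= a + b)%N, chainP actA MA a, chainP actD MD b,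
      (forall x, MA a x -> M k (al x)) & (forall y, MD b y -> exists x, M k x /\ be x = y)].
Proof.
elim: k => [|k IH] hM.
  exists 0%N, 0%N, (fun _ x => M 0%N (al x)), (fun _ y => exists x, M 0%N x /\ be x = y).
  case: hM => HM _.
  split=> //.
  - by split=> // i; apply: pre_al.
  - by split=> // i; apply: img_be.
have hM' : chainP actB M k by case: hM => HM SM; split=> // i ik; apply: SM; apply: ltnW.
have [a [b [MA [MD [kab cA cD topA topD]]]]] := IH hM'.
have [HM SM] := hM.
have [inc [u [u1 u2]]] := SM k (ltnSn k).
case: (classic (exists x, M k x /\ be x = be u)) => [[x [xk ex']]|nex].
  have : be (u - x) = 0 by rewrite beD beN ex' subrr.
  move/ex => [w hw].
  exists a.+1, b, (fun i => if (i <= a)%N then MA i else (fun x => M k.+1 (al x))), MD.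
  split.
  - by rewrite addSn ltnS.
  - apply: snoc => //.
    + by apply: pre_al.
    + by move=> y /topA; apply: inc.
    exists w; split.
      rewrite hw; case: (HM k.+1) => _ PD PN _; apply: PD => //; apply: PN; exact: inc.
    move=> /topA; rewrite hw => h; apply: u2.
    have -> : u = (u - x) + x by rewrite subrK.
    by case: (HM k) => _ PD _ _; apply: PD.
  - exact: cD.
  - by rewrite ltnn.
  - move=> y /topD [x0 [x0k <-]]; exists x0; split=> //; exact: inc.
exists a, b.+1, MA, (fun i => if (i <= b)%N then MD i else (fun y => exists x, M k.+1 x /\ be x = y)).
split.
- by rewrite addnS ltnS.
- exact: cA.
- apply: snoc => //.
  + by apply: img_be.
  + by move=> y /topD [x [xk <-]]; exists x; split=> //; apply: inc.
  exists (be u); split; first by exists u.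
  move=> /topD [x [xk e]]; apply: nex; by exists x.
- by move=> x /topA; apply: inc.
- by rewrite ltnn.
Qed.

Lemma additivity : finite_length actA -> finite_length actB ->
  mlength actB = (mlength actA + mlength actD)%N.
Proof.
move=> [la hA] [lb hB].
have hD : exists l, length_is actD l.
  apply: (@find_max _ _ _ lb) => h.
  have := lower (chain0 actA) h; rewrite add0n => h'.
  by case: hB => _; apply.
have [ld hD'] := hD.
rewrite (mlength_eq hA) (mlength_eq hB) (mlength_eq hD').
apply/eqP; rewrite eqn_leq; apply/andP; split.
  have [M hM] := hB.1.
  have [a [b [MA [MD [kab cA cD _ _]]]]] := upper hM.
  apply: (leq_trans kab); apply: leq_add.
    by apply: (le_length hA); exists MA.
  by apply: (le_length hD'); exists MD.
apply: (le_length hB); apply: lower; [exact: hA.1 | exact: hD'.1].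
Qed.
End Ses.

Lemma Delta_shift d s (f : nat -> int) n :
  Delta d s (fun m => f (m + d)%N - f m) n = Delta d s f (n + d)%N - Delta d s f n.
Proof.
elim: s n => [|s IH] n //=.
by rewrite !IH; ring.
Qed.

Lemma Delta_ev d s (f g : nat -> int) N :
  (forall m, (N <= m)%N -> f m = g m) -> forall n, (N <= n)%N -> Delta d s f n = Delta d s g n.
Proof.
move=> hfg; elim: s => [|s IH] n hn //=; first exact: hfg.
rewrite !IH //; exact: leq_trans hn (leq_addr _ _).
Qed.

Theorem lemma3p4 (Rg : gcring) (C : addcat) (S : suspension C)
  (T : triangulated S) (L : rlinear Rg S)
  (X Y : Obj C) (d : nat) (z : Rg)
  (Yz : Obj C) (g : Mor (shn S d Y) Yz) (h : Mor Yz (Sg S Y)) :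
  (0 < d)%N -> ~~ odd d -> gdeg d z ->
  dist T (phi L d z Y) g h ->
  lam_finite_all L X Y ->
  (exists N : nat, forall n : nat, (N <= n)%N ->
     ses (@hact Rg C S L X (shn S n Y))
         (@hact Rg C S L X (shn S (n + d) Y))
         (@hact Rg C S L X (shn S n Yz))) ->
  (exists N : nat, forall n : nat, (N <= n)%N ->
     herbrand L d X Yz n = herbrand L d X Y (n + d) - herbrand L d X Y n) /\
  (forall s : nat, (1 <= s)%N -> exists N : nat, forall n : nat, (N <= n)%N ->
     Delta d s.-1 (herbrand L d X Yz) n = Delta d s (herbrand L d X Y) n).
Proof.
move=> _ hd _ _ [fin _] [N hN].
have key : forall n, (N <= n)%N -> lam L X Y (n + d) = (lam L X Y n + lam L X Yz n)%N.
  move=> n hn; have [al [be [[alD beD alA beA] [alI beS ex]]]] := hN n hn.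
  exact: (additivity alD beD alA beA alI beS ex (fin n) (fin (n + d)%N)).
have P1 : forall n, (N <= n)%N ->
    herbrand L d X Yz n = herbrand L d X Y (n + d) - herbrand L d X Y n.
  move=> n hn; rewrite /herbrand -sumrB; apply: eq_bigr => i _.
  have hni : (N <= n + i)%N by exact: leq_trans hn (leq_addr _ _).
  have -> : (-1) ^+ (n + d + i) = (-1) ^+ (n + i) :> int.
    by rewrite -signr_odd -[RHS]signr_odd !oddD (negbTE hd) addbF.
  rewrite addnAC key // PoszD; ring.
split; first by exists N.
case=> // s _; exists N => n hn /=.
rewrite -Delta_shift; apply: (@Delta_ev d s (herbrand L d X Yz) (fun m => herbrand L d X Y (m + d) - herbrand L d X Y m) N _ n hn) => m hm.
by rewrite P1.
Qed.
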